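(* For every $n\ge 1$, the map $\nu:S_n\to\mathcal{D}_n\times\mathcal{D}_n$, $\nu(\sigma)=(\lambda(\sigma),\mu(\sigma))$, is injective when restricted to the set $S_n(1234)$ of permutations of $[n]$ avoiding the pattern $1234$.
   Context: A permutation $\sigma\in S_n$ avoids $1234$ if it has no subsequence $\sigma(i_1)<\sigma(i_2)<\sigma(i_3)<\sigma(i_4)$ with $i_1<i_2<i_3<i_4$. $\mathcal{D}_n$ denotes the set of Dyck paths of semilength $n$ (lattice paths from $(0,0)$ to $(2n,0)$ with steps $U=(1,1)$, $D=(1,-1)$, never going below the $x$-axis). For $\sigma=x_1x_2\cdots x_n$: $x_i$ is a left-to-right (LTR) minimum if $x_i<x_j$ for all $j<i$; $x_i$ is a right-to-left (RTL) maximum if $x_i>x_j$ for all $j>i$. The map $\lambda$: write $\sigma=m_1w_1m_2w_2\cdots m_kw_k$ where $m_1>m_2>\dots>m_k=1$ are the LTR minima of $\sigma$ and $w_i$ are (possibly empty) words, $l_i=|w_i|$; set $m_0=n+1$; then $\lambda(\sigma)=U^{m_0-m_1}D^{l_1+1}U^{m_1-m_2}D^{l_2+1}\cdots U^{m_{k-1}-m_k}D^{l_k+1}$. The map $\mu$: write $\sigma=u_hM_hu_{h-1}M_{h-1}\cdots u_1M_1$ where $M_1<M_2<\dots<M_h=n$ are the RTL maxima of $\sigma$ and $u_i$ are (possibly empty) words; set $M_0=0$; then $\mu(\sigma)=U^{M_1-M_0}D^{|u_1|+1}U^{M_2-M_1}D^{|u_2|+1}\cdots U^{M_h-M_{h-1}}D^{|u_h|+1}$.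 (Equivalently, the ascent code of $\mu(\sigma)$ is $M_1,\dots,M_{h-1}$ and its descent code is $n-P_2,\dots,n-P_h$, where $P_i$ is the position of $M_i$.) *)

(* Defs.v *)
From mathcomp Require Import all_boot all_fingroup.
Set Implicit Arguments. Unset Strict Implicit. Unset Printing Implicit Defensive.

(* A lattice path is a seq bool: true = U = (1,1), false = D = (1,-1). *)
Definition U := true.
Definition D := false.

Fixpoint dyck_from (h : nat) (p : seq bool) : bool :=
  match p with
  | [::] => h == 0
  | b :: p' => if b then dyck_from h.+1 p' else (0 < h) && dyck_from h.-1 p'
  end.
Definition is_dyck (n : nat) (p : seq bool) : bool :=
  (size p == 2 * n) && dyck_from 0 p.

(* The one-line notation x_1 ... x_n of sigma in S_n, with values in [n] = {1..n}
   (sigma acts on 'I_n = {0..n-1}, so we shift by one). *)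
Definition word n (s : 'S_n) : seq nat := [seq (s i).+1 | i <- enum 'I_n].

Definition avoids1234 n (s : 'S_n) : bool :=
  ~~ [exists i1 : 'I_n, exists i2 : 'I_n, exists i3 : 'I_n, exists i4 : 'I_n,
        [&& i1 < i2, i2 < i3, i3 < i4,
            s i1 < s i2, s i2 < s i3 & s i3 < s i4]].

(* lambda: scanning left to right with m = current LTR minimum (initially
   m_0 = n+1); a new LTR minimum x contributes U^(m - x) followed by the D of
   its own block, each other letter of w_i contributes one D.  This produces
   U^{m_0-m_1} D^{l_1+1} ... U^{m_{k-1}-m_k} D^{l_k+1}. *)
Fixpoint lambda_aux (m : nat) (w : seq nat) : seq bool :=
  match w with
  | [::] => [::]
  | x :: w' => if x < m then nseq (m - x) U ++ D :: lambda_aux x w'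
               else D :: lambda_aux m w'
  end.
Definition lambda_map n (s : 'S_n) : seq bool := lambda_aux n.+1 (word s).

(* mu: sigma = u_h M_h ... u_1 M_1; reading sigma right to left gives
   M_1 rev(u_1) M_2 rev(u_2) ...; with m = current RTL maximum (M_0 = 0),
   a new RTL maximum x contributes U^(x - m) D, other letters contribute D.
   This produces U^{M_1-M_0} D^{|u_1|+1} ... U^{M_h-M_{h-1}} D^{|u_h|+1}. *)
Fixpoint mu_aux (m : nat) (w : seq nat) : seq bool :=
  match w with
  | [::] => [::]
  | x :: w' => if m < x then nseq (x - m) U ++ D :: mu_aux x w'
               else D :: mu_aux m w'
  end.
Definition mu_map n (s : 'S_n) : seq bool := mu_aux 0 (rev (word s)).

Definition nu_map n (s : 'S_n) : seq bool * seq bool := (lambda_map s, mu_map s).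

(* Main.v *)
Require Import Defs.
From mathcomp Require Import all_boot all_fingroup zify.

Fixpoint marksL (m : nat) (w : seq nat) : seq (option nat) :=
  match w with [::] => [::]
  | x :: w' => if x < m then Some x :: marksL x w' else None :: marksL m w' end.
Fixpoint marksR (m : nat) (w : seq nat) : seq (option nat) :=
  match w with [::] => [::]
  | x :: w' => if m < x then Some x :: marksR x w' else None :: marksR m w' end.

Lemma nseq_pref a b l l' : nseq a true ++ false :: l = nseq b true ++ false :: l' -> a = b /\ l = l'.
Proof.
elim: a b => [|a IH] [|b] //=; first by case.
by case=> /IH [-> ->].
Qed.

Lemma lam_marks w v m : lambda_aux m w = lambda_aux m v -> marksL m w = marksL m v.
Proof.
elim: w v m => [|x w IH] [|y v] m //=.
- by case: ifP => _ //; case: (_ - _).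
- case: ifP => //. by case: (m - x).
- case: ifP => hx; case: ifP => hy.
  + move/nseq_pref=> [h1 h2]. have exy : x = y by lia.
    by subst y; rewrite (IH _ _ h2).
  + case E: (m - x) => [|k] /=; first by lia. by [].
  + case E: (m - y) => [|k] /=; first by lia. by [].
  + by case=> /IH ->.
Qed.

Lemma mu_marks w v m : mu_aux m w = mu_aux m v -> marksR m w = marksR m v.
Proof.
elim: w v m => [|x w IH] [|y v] m //=.
- by case: ifP => _ //; case: (_ - _).
- case: ifP => //. by case: (x - m).
- case: ifP => hx; case: ifP => hy.
  + move/nseq_pref=> [h1 h2]. have exy : x = y by lia.
    by subst y; rewrite (IH _ _ h2).
  + case E: (x - m) => [|k] /=; first by lia. by [].
  + case E: (y - m) => [|k] /=; first by lia. by [].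
  + by case=> /IH ->.
Qed.

Lemma nth_marksL w m i : i < size w ->
  nth None (marksL m w) i = if (nth 0 w i < m) && all (fun y => nth 0 w i < y) (take i w)
                            then Some (nth 0 w i) else None.
Proof.
elim: w m i => [|x w IH] m [|i] //=.
- by rewrite andbT; case: ifP.
- move=> hi. case: ifP => hx /=; rewrite IH //.
  + set y := nth 0 w i. case: (ltnP y x) => h /=.
    * by rewrite (ltn_trans h hx).
    * by rewrite !andbF.
  + set y := nth 0 w i. case: (ltnP y m) => h /=; last by [].
    have -> : y < x by lia. by [].
Qed.

Lemma nth_marksR w m i : i < size w ->
  nth None (marksR m w) i = if (m < nth 0 w i) && all (fun y => y < nth 0 w i) (take i w)
                            then Some (nth 0 w i) else None.
Proof.
elim: w m i => [|x w IH] m [|i] //=.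
- by rewrite andbT; case: ifP.
- move=> hi. case: ifP => hx /=; rewrite IH //.
  + set y := nth 0 w i. case: (ltnP x y) => h /=.
    * by rewrite (ltn_trans hx h).
    * by rewrite !andbF.
  + set y := nth 0 w i. case: (ltnP m y) => h /=; last by [].
    have -> : x < y by lia. by [].
Qed.
Set Implicit Arguments. Unset Strict Implicit.

Definition ltr n (s : 'S_n) (i : 'I_n) := [forall j : 'I_n, (j < i) ==> (s i < s j)].
Definition rtl n (s : 'S_n) (i : 'I_n) := [forall j : 'I_n, (i < j) ==> (s j < s i)].
Definition sp n (s : 'S_n) (i : 'I_n) := ltr s i || rtl s i.

Lemma decr n (t : 'S_n) (i j : 'I_n) : avoids1234 t -> i < j -> ~~ ltr t i -> ~~ rtl t j -> t j < t i.
Proof.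
move=> av ij /forallPn [a]; rewrite negb_imply -leqNgt => /andP [ai ta].
move=> /forallPn [b]; rewrite negb_imply -leqNgt => /andP [jb tb].
have nij : t i != t j by apply/eqP => /perm_inj h; move: ij; rewrite h ltnn.
have nai : t a != t i by apply/eqP => /perm_inj h; move: ai; rewrite h ltnn.
have njb : t j != t b by apply/eqP => /perm_inj h; move: jb; rewrite h ltnn.
case: (ltngtP (t j) (t i)) => // h; last by move: nij; rewrite -(inj_eq val_inj) /= h eqxx.
exfalso; move/negP: av; apply; apply/existsP; exists a; apply/existsP; exists i;
  apply/existsP; exists j; apply/existsP; exists b.
rewrite ai ij jb h /=. apply/andP; split.
  by rewrite ltn_neqAle nai ta.
by rewrite ltn_neqAle njb tb.
Qed.

Lemma step n (s t : 'S_n) (q : 'I_n) : avoids1234 t -> (forall i, sp s i = sp t i) ->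
  (forall i, sp s i -> s i = t i) -> (forall r : 'I_n, r < q -> s r = t r) ->
  s q != t q -> s q < t q.
Proof.
move=> av hsp hag hlt hne.
have nq : ~~ sp s q by apply/negP => /hag /eqP; rewrite (negbTE hne).
set r := (t^-1)%g (s q).
have tr : t r = s q by rewrite /r permKV.
have nrq : r != q by apply/eqP => e; move: hne; rewrite -tr e eqxx.
have nr : ~~ sp t r.
  apply/negP => h; rewrite -hsp in h; have := hag _ h; rewrite tr => /perm_inj e.
  by move: nrq; rewrite e eqxx.
case: (ltngtP r q) => hrq.
- have := hlt _ hrq; rewrite tr => /perm_inj e. by move: nrq; rewrite e eqxx.
- rewrite -tr; apply: decr => //.
  + by move: nq; rewrite hsp /sp negb_or => /andP [].
  + by move: nr; rewrite /sp negb_or => /andP [].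
- by move: nrq; rewrite (val_inj hrq) eqxx.
Qed.

Lemma key n (s t : 'S_n) : avoids1234 s -> avoids1234 t -> (forall i, sp s i = sp t i) ->
  (forall i, sp s i -> s i = t i) -> s = t.
Proof.
move=> avs avt hsp hag.
suff H : forall k (i : 'I_n), i < k -> s i = t i.
  by apply/permP => i; apply: (H i.+1).
elim=> [//|k IH] i; rewrite ltnS leq_eqVlt => /orP [/eqP ik|]; last exact: IH.
subst k. apply/eqP; apply/negPn/negP => hne.
have h1 := step avt hsp hag IH hne.
have h2 : t i < s i.
  have hsp' : forall j, sp t j = sp s j by move=> j; rewrite hsp.
  have hag' : forall j, sp t j -> t j = s j by move=> j hj; rewrite hag // -hsp'.
  apply: (step avs hsp' hag') => //; first by move=> r /IH.
  by rewrite eq_sym.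
by move: h1; rewrite ltnNge (ltnW h2).
Qed.

Lemma size_word n (s : 'S_n) : size (word s) = n.
Proof. by rewrite /word size_map size_enum_ord. Qed.

Lemma nth_word n (s : 'S_n) (i : 'I_n) : nth 0 (word s) i = (s i).+1.
Proof.
by rewrite /word (nth_map i) ?size_enum_ord // nth_ord_enum.
Qed.

Lemma ltrE n (s : 'S_n) (i : 'I_n) :
  all (fun y => (s i).+1 < y) (take i (word s)) = ltr s i.
Proof.
apply/(all_nthP 0)/forallP.
- move=> H j; apply/implyP => ji.
  have := H j; rewrite size_take size_word ltn_ord nth_take // nth_word ltnS.
  by apply.
- move=> H k; rewrite size_take size_word ltn_ord => ki.
  have kn : k < n by apply: ltn_trans ki (ltn_ord i).
  have := H (Ordinal kn); rewrite /= ki /= => hk.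
  by rewrite nth_take // -[k]/(val (Ordinal kn)) nth_word ltnS.
Qed.

Lemma rtlE n (s : 'S_n) (i : 'I_n) :
  all (fun y => y < (s i).+1) (drop i.+1 (word s)) = rtl s i.
Proof.
apply/(all_nthP 0)/forallP.
- move=> H j; apply/implyP => ij.
  have := H (j - i.+1); rewrite size_drop size_word nth_drop.
  have -> : i.+1 + (j - i.+1) = j by lia.
  rewrite nth_word ltnS; apply.
  have := ltn_ord j; lia.
- move=> H k; rewrite size_drop size_word => ki.
  have kn : i.+1 + k < n by lia.
  have := H (Ordinal kn); rewrite /= => /implyP hk.
  rewrite nth_drop -[i.+1 + k]/(val (Ordinal kn)) nth_word ltnS.
  by apply: hk; rewrite /=; lia.
Qed.

Lemma marksL_word n (s : 'S_n) (i : 'I_n) :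
  nth None (marksL n.+1 (word s)) i = if ltr s i then Some (s i).+1 else None.
Proof.
rewrite nth_marksL ?size_word // nth_word ltnS ltn_ord /= ltrE //.
Qed.

Lemma marksR_word n (s : 'S_n) (i : 'I_n) :
  nth None (marksR 0 (rev (word s))) (n - i.+1) = if rtl s i then Some (s i).+1 else None.
Proof.
have hi := ltn_ord i.
rewrite nth_marksR ?size_rev ?size_word; last by lia.
rewrite nth_rev ?size_word; last by lia.
have -> : n - (n - i.+1).+1 = i by lia.
rewrite take_rev size_word.
have -> : n - (n - i.+1) = i.+1 by lia.
by rewrite all_rev nth_word /= rtlE.
Qed.

Lemma opt_eq (a b : bool) (x y : nat) :
  (if a then Some x else None) = (if b then Some y else None) -> a = b /\ (a -> x = y).
Proof. by case: a; case: b => //= [[->]]. Qed.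

Theorem mainTheorem1 (n : nat) (hn : 1 <= n) (s t : 'S_n) :
  avoids1234 s -> avoids1234 t -> nu_map s = nu_map t -> s = t.
Proof.
move=> avs avt [/lam_marks mL /mu_marks mR].
have hL : forall i, ltr s i = ltr t i /\ (ltr s i -> s i = t i).
  move=> i; have := congr1 (fun l => nth None l i) mL; rewrite /= !marksL_word.
  by move/opt_eq => [-> h]; split => // /h [] /val_inj.
have hR : forall i, rtl s i = rtl t i /\ (rtl s i -> s i = t i).
  move=> i; have := congr1 (fun l => nth None l (n - i.+1)) mR; rewrite /= !marksR_word.
  by move/opt_eq => [-> h]; split => // /h [] /val_inj.
apply: key => // i.
- by rewrite /sp (proj1 (hL i)) (proj1 (hR i)).
- by case/orP => h; [apply: (proj2 (hL i)) | apply: (proj2 (hR i))].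
Qed.
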